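(* Let $n=2m>2$ and let $(A;B)\in GS(n)$ be Golay sequences. Then $(A;A;B;B)$ and $(B;B;A;A)$ belong to $NS(n)$, and they are equivalent (with respect to the equivalence relation on $NS(n)$ generated by the elementary transformations (E1)–(E5)) if and only if $B^*\in\{A,-A,A',-A'\}$.
   Context: A binary sequence is a finite sequence $A=a_1,\dots,a_n$ with $a_i\in\{\pm1\}$. Its nonperiodic autocorrelation function is $N_A(i)=\sum_{j\in\mathbb Z}a_ja_{i+j}$, where $a_k=0$ for $k<1$ or $k>n$. For binary sequences: $-A=-a_1,\dots,-a_n$, $A'=a_n,\dots,a_1$, $A^*=a_1,-a_2,a_3,\dots,(-1)^{n-1}a_n$. Golay sequences $GS(n)$: pairs $(A;B)$ of binary sequences of length $n$ with $N_A(i)+N_B(i)=0$ for all $i\ne0$. Normal sequences $NS(n)$: quadruples $(A;A;C;D)$ of binary sequences of length $n$ with $2N_A(i)+N_C(i)+N_D(i)=0$ for all $i\neq0$. Encoding: write $n=2m$ (even case). The $i$-th quad ($1\le i\le m$) of a pair $(X;Y)$ of length-$n$ sequences is $\begin{bmatrix} x_i & x_{n+1-i}\\ y_i & y_{n+1-i}\end{bmatrix}$; quads are labelled (rows as pairs) $1=[(+,+),(+,+)]$, $2=[(+,+),(-,-)]$, $3=[(-,+),(-,+)]$, $4=[(+,-),(-,+)]$, $5=[(-,+),(+,-)]$, $6=[(+,-),(+,-)]$, $7=[(-,-),(+,+)]$, $8=[(-,-),(-,-)]$. Elementary transformations of $(A;A;C;D)\in NS(n)$: (E1) replace both copies of $A$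 by $-A$, or $C$ by $-C$, or $D$ by $-D$; (E2) replace both copies of $A$ by $A'$, or $C$ by $C'$, or $D$ by $D'$; (E3) interchange $C$ and $D$; (E4) replace $(C;D)$ by the pair obtained by replacing, for every $i$ whose $i$-th quad of $(C;D)$ has label $4$, that quad by the quad labelled $5$, and vice versa (all other quads unchanged); this yields an element of $NS(n)$; (E5) replace $(A;A;C;D)$ by $(A^*;A^*;C^*;D^* )$. Two members of $NS(n)$ are equivalent if one is obtained from the other by a finite sequence of elementary transformations. *)

(* Defs.v *)
(* Sequences are 0-indexed: a_1..a_n of the paper is A`_0..A`_(n-1). *)
From HB Require Import structures.
From mathcomp Require Import all_boot all_order all_algebra.
From Stdlib Require Import Relation_Operators.
Set Implicit Arguments. Unset Strict Implicit. Unset Printing Implicit Defensive.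
Import Order.TTheory GRing.Theory Num.Theory.
Local Open Scope ring_scope.

Definition binseq (n : nat) (A : seq int) : bool :=
  (size A == n) && all (fun x => (x == 1) || (x == -1)) A.

Definition entry (A : seq int) (k : int) : int :=
  match k with Posz m => nth 0 A m | Negz _ => 0 end.

Definition acf (A : seq int) (i : int) : int :=
  \sum_(j < size A) A`_j * entry A (j%:Z + i).

Definition is_GS (n : nat) (A B : seq int) : Prop :=
  binseq n A /\ binseq n B /\ (forall i : int, i != 0 -> acf A i + acf B i = 0).

Definition quad := (seq int * seq int * seq int * seq int)%type.

Definition is_NS (n : nat) (q : quad) : Prop :=
  let: (A1, A2, C, D) := q in
  [/\ binseq n A1, A1 = A2, binseq n C, binseq n D &
      forall i : int, i != 0 -> 2 * acf A1 i + acf C i + acf D i = 0].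

Definition negs (A : seq int) : seq int := map (fun x => - x) A.
Definition star (A : seq int) : seq int :=
  mkseq (fun j => (-1) ^+ j * A`_j) (size A).

(* Quad labels 4 and 5 (entries x_i, x_{n+1-i}, y_i, y_{n+1-i}). *)
Definition q4 : int * int * int * int := (1, -1, -1, 1).
Definition q5 : int * int * int * int := (-1, 1, 1, -1).
Definition swap45 (q : int * int * int * int) : int * int * int * int :=
  if q == q4 then q5 else if q == q5 then q4 else q.

(* (E4): for n = 2m, the pair obtained from (C;D) by exchanging quads with
   labels 4 and 5.  Quad k (0-indexed, k < m) is (c_k, c_{n-1-k}, d_k, d_{n-1-k}). *)
Definition quad_at (C D : seq int) (k : nat) : int * int * int * int :=
  let n := size C in (C`_k, C`_(n.-1 - k)%N, D`_k, D`_(n.-1 - k)%N).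

Definition E4 (C D : seq int) : seq int * seq int :=
  let n := size C in
  let newq j := swap45 (quad_at C D (minn j (n.-1 - j)%N)) in
  (mkseq (fun j => let: (x1, x2, _, _) := newq j in
                   if (j <= n.-1 - j)%N then x1 else x2) n,
   mkseq (fun j => let: (_, _, y1, y2) := newq j in
                   if (j <= n.-1 - j)%N then y1 else y2) n).

Inductive elem_step : quad -> quad -> Prop :=
  | E1a A1 A2 C D : elem_step (A1, A2, C, D) (negs A1, negs A2, C, D)
  | E1c A1 A2 C D : elem_step (A1, A2, C, D) (A1, A2, negs C, D)
  | E1d A1 A2 C D : elem_step (A1, A2, C, D) (A1, A2, C, negs D)
  | E2a A1 A2 C D : elem_step (A1, A2, C, D) (rev A1, rev A2, C, D)
  | E2c A1 A2 C D : elem_step (A1, A2, C, D) (A1, A2, rev C, D)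
  | E2d A1 A2 C D : elem_step (A1, A2, C, D) (A1, A2, C, rev D)
  | E3 A1 A2 C D : elem_step (A1, A2, C, D) (A1, A2, D, C)
  | E4s A1 A2 C D : elem_step (A1, A2, C, D) (A1, A2, (E4 C D).1, (E4 C D).2)
  | E5 A1 A2 C D : elem_step (A1, A2, C, D) (star A1, star A2, star C, star D).

Definition ns_equiv (q1 q2 : quad) : Prop :=
  clos_refl_trans quad elem_step q1 q2 \/ clos_refl_trans quad elem_step q2 q1.

(* Main.v *)
Require Import Defs.
From HB Require Import structures.
From mathcomp Require Import all_boot all_order all_algebra.
From Stdlib Require Import Relation_Operators.
Import Order.TTheory GRing.Theory Num.Theory.
Local Open Scope ring_scope.

Lemma size_negs X : size (negs X) = size X.
Proof. by rewrite size_map. Qed.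
Lemma size_star X : size (star X) = size X.
Proof. by rewrite size_mkseq. Qed.

Lemma negsK X : negs (negs X) = X.
Proof. by rewrite /negs -map_comp (eq_map (g := id)) ?map_id // => x /=; rewrite opprK. Qed.

Lemma rev_negs X : rev (negs X) = negs (rev X).
Proof. by rewrite /negs map_rev. Qed.

Lemma star_negs X : star (negs X) = negs (star X).
Proof.
apply: (@eq_from_nth _ 0); first by rewrite size_negs !size_star size_negs.
move=> i; rewrite size_star size_negs => Hi.
rewrite /star nth_mkseq ?size_negs // !(nth_map (0:int)) ?size_mkseq // nth_mkseq //.
by rewrite mulrN.
Qed.

Lemma starK X : star (star X) = X.
Proof.
apply: (@eq_from_nth _ 0); first by rewrite !size_star.
move=> i; rewrite !size_star => Hi.
rewrite /star !nth_mkseq ?size_mkseq // mulrA -expr2 -exprM mulnC exprM sqrrN.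
by rewrite !expr1n mul1r.
Qed.

Lemma nth_star X j : (j < size X)%N -> nth 0 (star X) j = (-1) ^+ j * nth 0 X j.
Proof. by move=> Hj; rewrite /star nth_mkseq. Qed.
Lemma nth_negs X j : nth 0 (negs X) j = - nth 0 X j.
Proof.
case: (ltnP j (size X)) => Hj; first by rewrite (nth_map 0).
by rewrite !nth_default ?size_map // oppr0.
Qed.
Lemma nth_rev' (X : seq int) j : (j < size X)%N -> nth 0 (rev X) j = nth 0 X (size X - j.+1).
Proof. exact: nth_rev. Qed.

Lemma star_rev X : ~~ odd (size X) -> star (rev X) = negs (rev (star X)).
Proof.
move=> Hev.
apply: (@eq_from_nth _ 0); first by rewrite size_negs !size_rev !size_star size_rev.
move=> i; rewrite size_star size_rev => Hi.
have Hi' : (size X - i.+1 < size X)%N by rewrite ltn_subrL; apply: leq_ltn_trans Hi.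
rewrite nth_star ?size_rev // nth_negs !nth_rev' ?size_star // nth_star //.
rewrite -mulNr; congr (_ * _).
rewrite -signr_odd -(signr_odd _ (size X - i.+1)) oddB // (negbTE Hev) /=.
by case: (odd i) => /=; rewrite ?expr1 ?expr0 ?opprK.
Qed.

Definition T (s r t : bool) (A : seq int) :=
  (if s then negs else id) ((if r then rev else id) ((if t then star else id) A)).

Definition orb (A X : seq int) := exists s r t, X = T s r t A.

Lemma negs_T s r t A : negs (T s r t A) = T (~~ s) r t A.
Proof. by case: s => //=; rewrite negsK. Qed.

Lemma rev_T s r t A : rev (T s r t A) = T s (~~ r) t A.
Proof. by case: s; case: r => //=; rewrite ?rev_negs ?revK. Qed.

Lemma star_T s r t A : ~~ odd (size A) -> star (T s r t A) = T (s (+) r) r (~~ t) A.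
Proof.
move=> Hev.
have H1 := @star_rev A Hev.
have H2 : star (rev (star A)) = negs (rev (star (star A))).
  by apply: star_rev; rewrite size_star.
by case: s; case: r; case: t => /=; rewrite ?star_negs ?H1 ?H2 ?starK ?negsK.
Qed.

Lemma step_inv A q1 q2 : ~~ odd (size A) -> elem_step q1 q2 ->
  orb A q1.1.1.1 -> orb A q2.1.1.1.
Proof.
move=> Hev st; case: st => A1 A2 C D /= [s [r [t ->]]].
- by exists (~~ s), r, t; rewrite negs_T.
- by exists s, r, t.
- by exists s, r, t.
- by exists s, (~~ r), t; rewrite rev_T.
- by exists s, r, t.
- by exists s, r, t.
- by exists s, r, t.
- by exists s, r, t.
- by exists (s (+) r), r, (~~ t); rewrite star_T.
Qed.

Lemma rt_inv A q1 q2 : ~~ odd (size A) -> clos_refl_trans quad elem_step q1 q2 ->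
  orb A q1.1.1.1 -> orb A q2.1.1.1.
Proof.
move=> Hev H; elim: H => //.
- by move=> x y st; apply: step_inv.
- by move=> x y z _ IH1 _ IH2 h; apply: IH2; apply: IH1.
Qed.

Lemma acf_last X k : size X = k.+1 -> acf X k%:Z = X`_0 * X`_k.
Proof.
move=> HX; rewrite /acf HX big_ord_recl /= big1 ?addr0; first by rewrite add0n.
move=> i _; rewrite [X`_(_ + k)]nth_default ?mulr0 // HX.
by rewrite /bump /= add1n addSn ltnS leq_addl.
Qed.

Lemma binseq_nth n X j : binseq n X -> (j < n)%N -> (X`_j == 1) || (X`_j == -1).
Proof.
case/andP => /eqP Hs Hall Hj.
by move/(all_nthP 0): Hall; apply; rewrite Hs.
Qed.

Lemma T_ends k s r A : size A = k.+1 ->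
  (T s r false A)`_0 * (T s r false A)`_k = A`_0 * A`_k.
Proof.
move=> HA.
have E : forall Y : seq int, size Y = k.+1 -> (rev Y)`_0 * (rev Y)`_k = Y`_0 * Y`_k.
  by move=> Y HY; rewrite !nth_rev' ?HY // subSS subn0 subnn mulrC.
case: s; case: r => /=; rewrite ?nth_negs ?mulrNN ?E //.
Qed.

Lemma gs_contra k A B s r : (0 < k)%N -> binseq k.+1 A -> binseq k.+1 B ->
  acf A k%:Z + acf B k%:Z = 0 -> B = T s r false A -> False.
Proof.
move=> Hk HA HB H HBA.
have sA : size A = k.+1 by case/andP: HA => /eqP.
have sB : size B = k.+1 by case/andP: HB => /eqP.
move: H; rewrite !acf_last // HBA T_ends //.
have h0 := @binseq_nth _ _ 0 HA (ltn0Sn _).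
have h1 := @binseq_nth _ _ k HA (ltnSn _).
by case/orP: h0 => /eqP ->; case/orP: h1 => /eqP ->.
Qed.

Lemma T_inv s r Y : T s r false (T s r false Y) = Y.
Proof. by case: s; case: r => /=; rewrite ?rev_negs ?negsK ?revK. Qed.

Lemma ns_aux (a b : int) : a + b = 0 -> 2 * a + b + b = 0.
Proof.
move=> h; have -> : 2 * a + b + b = 2 * (a + b).
  by rewrite mulrDr -addrA; congr (_ + _); rewrite mulr_natl mulr2n.
by rewrite h mulr0.
Qed.

Ltac st c := eapply rt_trans; [apply rt_step; apply c|].

Theorem mainTheorem3 (n m : nat) (A B : seq int) :
  n = (2 * m)%N -> (2 < n)%N -> is_GS n A B ->
  [/\ is_NS n (A, A, B, B), is_NS n (B, B, A, A) &
      (ns_equiv (A, A, B, B) (B, B, A, A) <->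
       star B \in [:: A; negs A; rev A; negs (rev A)])].
Proof.
move=> Hn Hn2 [HA [HB H]].
have sA : size A = n by case/andP: HA => /eqP.
have sB : size B = n by case/andP: HB => /eqP.
have HevA : ~~ odd (size A) by rewrite sA Hn mul2n odd_double.
have HevB : ~~ odd (size B) by rewrite sB Hn mul2n odd_double.
split.
- by split => // i hi; apply: ns_aux; apply: H.
- by split => // i hi; apply: ns_aux; rewrite addrC; apply: H.
case: n Hn Hn2 HA HB H sA sB => [|k] Hn Hn2 HA HB H sA sB; first by [].
have Hk : (0 < k)%N by move: Hn2; rewrite ltnS; case: (k).
have Hk0 : k%:Z != 0 by rewrite eqz_nat -lt0n.
split.
- case => Hr.
  + have [s [r [t E]]] : orb A B.
      by apply: (@rt_inv A _ _ HevA Hr); exists false, false, false.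
    case: t E => E.
    * rewrite E star_T //=; clear E.
      by case: s; case: r; rewrite /= !inE eqxx ?orbT.
    * by exfalso; apply: (@gs_contra _ _ _ _ _ Hk HA HB (H _ Hk0) E).
  + have [s [r [t E]]] : orb B A.
      by apply: (@rt_inv B _ _ HevB Hr); exists false, false, false.
    case: t E => E.
    * have E' : star B = T s r false A by rewrite E T_inv.
      rewrite E'; clear E E'.
      by case: s; case: r; rewrite /= !inE eqxx ?orbT.
    * by exfalso; apply: (@gs_contra _ _ _ _ _ Hk HB HA _ E); rewrite addrC; apply: H.
- move=> Hin; left.
  have EB : B = star (star B) by rewrite starK.
  rewrite !inE in Hin.
  case/or4P: Hin => /eqP E; rewrite E in EB; rewrite {}EB.
  + by apply: rt_step; have := E5 A A (star A) (star A); rewrite starK.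
  + st E5; rewrite starK star_negs.
    st E1a; st E1c; st E1d; rewrite !negsK; apply: rt_refl.
  + st E5; rewrite starK (@star_rev A HevA).
    st E2a; st E1a; st E2c; st E2d; rewrite !revK; apply: rt_refl.
  + st E5; rewrite starK star_negs (@star_rev A HevA) negsK.
    st E2a; st E1c; st E1d; st E2c; st E2d; rewrite !negsK !revK; apply: rt_refl.
Qed.
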